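(* Let $G$ be a directed graph with vertices $s,t$ and $k\ge1$. For any $C_1,C_2\in L^*$ and any $e\in E(C_1)\cup E(C_2)$, it holds that $\max(\mu_e(C_1\vee C_2),\mu_e(C_1\wedge C_2))\le\max(\mu_e(C_1),\mu_e(C_2))$.
   Context: An $s$-$t$ cut of a directed graph $G$ is a set $X\subseteq E(G)$ such that removing $X$ leaves no directed $s$-$t$ path; $\Gamma_G(s,t)$ is the set of $s$-$t$ cuts of minimum cardinality. Fix a maximum-size collection $\mathcal P$ of pairwise edge-disjoint directed $s$-$t$ paths (each minimum $s$-$t$ cut contains exactly one edge of each path in $\mathcal P$). For $X,Y\in\Gamma_G(s,t)$, $S_{\min}(X\cup Y)$ (resp. $S_{\max}(X\cup Y)$) consists, for each $p\in\mathcal P$, of the edge of $(X\cup Y)\cap p$ occurring first (resp. last) along $p$. $X\le Y$ means every directed $s$-$t$ path meets an edge of $X$ at or before an edge of $Y$. $U^k_{\mathrm{lr}}$ is the set of $k$-tuples $[X_1,\dots,X_k]$ of elements of $\Gamma_G(s,t)$ with $X_i\le X_j$ for all $i<j$. $L^*$ is the lattice on $U^k_{\mathrm{lr}}$ with componentwise order, join $[X_i]_i\vee[Y_i]_i=[S_{\max}(X_i\cup Y_i)]_i$ and meet $[X_i]_i\wedge[Y_i]_i=[S_{\min}(X_i\cup Y_i)]_i$. For $C=[X_1,\dots,X_k]$, $E(C)=\bigcup_i X_i$ and $\mu_e(C)$ is the number of indices $i$ with $e\in X_i$. *)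

(* Defs.v *)
From mathcomp Require Import all_boot.
Set Implicit Arguments. Unset Strict Implicit. Unset Printing Implicit Defensive.

Section Cuts.
Variables (V E : finType) (src tgt : E -> V).

Fixpoint walk_from (x : V) (p : seq E) : bool :=
  if p is e :: p' then (src e == x) && walk_from (tgt e) p' else true.

Definition is_path (s t : V) (p : seq E) : bool :=
  [&& walk_from s p, last s (map tgt p) == t & uniq (s :: map tgt p)].

Definition is_cut (s t : V) (X : {set E}) : Prop :=
  forall p, is_path s t p -> has (fun e => e \in X) p.

Definition is_min_cut (s t : V) (X : {set E}) : Prop :=
  is_cut s t X /\ forall Y : {set E}, is_cut s t Y -> #|X| <= #|Y|.

Definition edge_disjoint_paths (s t : V) (P : seq (seq E)) : Prop :=
  (forall p, p \in P -> is_path s t p) /\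
  (forall i j, i < size P -> j < size P -> i != j ->
     forall e, e \in nth [::] P i -> e \notin nth [::] P j).

Definition max_disjoint_paths (s t : V) (P : seq (seq E)) : Prop :=
  edge_disjoint_paths s t P /\
  forall Q, edge_disjoint_paths s t Q -> size Q <= size P.

Definition Smin (P : seq (seq E)) (Z : {set E}) : {set E} :=
  [set e | has (fun p => [&& e \in p, e \in Z &
              all (fun f => f \notin Z) (take (index e p) p)]) P].

Definition Smax (P : seq (seq E)) (Z : {set E}) : {set E} :=
  [set e | has (fun p => [&& e \in p, e \in Z &
              all (fun f => f \notin Z) (drop (index e p).+1 p)]) P].

Definition cut_le (s t : V) (X Y : {set E}) : Prop :=
  forall p, is_path s t p ->
    find (fun e => e \in X) p <= find (fun e => e \in Y) p.

Definition in_Ulr (s t : V) (k : nat) (C : 'I_k -> {set E}) : Prop :=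
  (forall i, is_min_cut s t (C i)) /\
  (forall i j : 'I_k, i < j -> cut_le s t (C i) (C j)).

Definition Ljoin (P : seq (seq E)) k (C D : 'I_k -> {set E}) : 'I_k -> {set E} :=
  fun i => Smax P (C i :|: D i).
Definition Lmeet (P : seq (seq E)) k (C D : 'I_k -> {set E}) : 'I_k -> {set E} :=
  fun i => Smin P (C i :|: D i).

Definition Eof k (C : 'I_k -> {set E}) : {set E} := \bigcup_(i < k) C i.
Definition mu k (e : E) (C : 'I_k -> {set E}) : nat := #|[set i : 'I_k | e \in C i]|.

End Cuts.

(* Main.v *)
Require Import Defs.
From mathcomp Require Import all_boot zify.
Set Implicit Arguments. Unset Strict Implicit. Unset Printing Implicit Defensive.

Section Menger.
Variables (V E : finType) (src tgt : E -> V) (s t : V).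

Definition outF (F : {set E}) v := \sum_(e in F) (src e == v : nat).
Definition inF (F : {set E}) v := \sum_(e in F) (tgt e == v : nat).
Definition balanced F n := forall v, v != t -> outF F v = inF F v + (v == s) * n.

Lemma sum_eq_in (R : {set V}) (a : V) : \sum_(v in R) (a == v : nat) = (a \in R).
Proof.
case: (boolP (a \in R)) => aR.
- rewrite (bigD1 a) //= eqxx big1 // => v /andP[_ nva].
  by rewrite eq_sym (negbTE nva).
- rewrite big1 // => v vR; case: eqP => // av; by rewrite av vR in aR.
Qed.

Lemma sum_out (R : {set V}) (F : {set E}) : \sum_(v in R) outF F v = \sum_(e in F) (src e \in R : nat).
Proof. rewrite /outF exchange_big; apply: eq_bigr => e _; exact: sum_eq_in. Qed.
Lemma sum_in (R : {set V}) (F : {set E}) : \sum_(v in R) inF F v = \sum_(e in F) (tgt e \in R : nat).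
Proof. rewrite /inF exchange_big; apply: eq_bigr => e _; exact: sum_eq_in. Qed.

Lemma cutflow (R : {set V}) (F : {set E}) n : s \in R -> t \notin R -> balanced F n ->
  \sum_(e in F) (src e \in R : nat) = \sum_(e in F) (tgt e \in R : nat) + n.
Proof.
move=> sR tR bal; rewrite -sum_out -sum_in.
rewrite (eq_bigr (fun v => inF F v + (v == s) * n)); last first.
  move=> v vR; apply: bal; apply: contraNneq tR => <-; done.
rewrite big_split /=; congr (_ + _).
rewrite (bigD1 s) //= eqxx mul1n big1 ?addn0 // => v /andP[_ /negbTE ->].
by rewrite mul0n.
Qed.

Lemma sum_split (F : {set E}) (R : {set V}) :
  \sum_(e in F) (src e \in R : nat) =
  \sum_(e in F) ((src e \in R) && (tgt e \in R) : nat) +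
  \sum_(e in F) ((src e \in R) && (tgt e \notin R) : nat).
Proof.
rewrite -big_split /=; apply: eq_bigr => e _.
by case: (src e \in R); case: (tgt e \in R).
Qed.

Lemma sum_count (p : seq E) (P : pred E) : \sum_(e <- p) (P e : nat) = count P p.
Proof. rewrite -sum1_count [RHS]big_mkcond /=; apply: eq_bigr => e _; by case: (P e). Qed.

Lemma out_pset p v : uniq p -> outF [set x in p] v = count (fun e => src e == v) p.
Proof.
move=> up; rewrite /outF (eq_bigl (mem p)); last by move=> e; rewrite inE.
by rewrite -big_uniq // sum_count.
Qed.
Lemma in_pset p v : uniq p -> inF [set x in p] v = count (fun e => tgt e == v) p.
Proof.
move=> up; rewrite /inF (eq_bigl (mem p)); last by move=> e; rewrite inE.
by rewrite -big_uniq // sum_count.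
Qed.

Lemma walk_count x p v : walk_from src tgt x p ->
  count (fun e => src e == v) p + (last x (map tgt p) == v) =
  count (fun e => tgt e == v) p + (x == v).
Proof.
elim: p x => [|e p IH] x /=; first by [].
move=> /andP[/eqP se w]; have := IH _ w; rewrite se; lia.
Qed.

Lemma outU (A B : {set E}) v : [disjoint A & B] -> outF (A :|: B) v = outF A v + outF B v.
Proof.
move=> dAB; rewrite /outF -bigU //; apply: eq_bigl => e; by rewrite !inE.
Qed.
Lemma inU (A B : {set E}) v : [disjoint A & B] -> inF (A :|: B) v = inF A v + inF B v.
Proof.
move=> dAB; rewrite /inF -bigU //; apply: eq_bigl => e; by rewrite !inE.
Qed.


Lemma edp_nil : edge_disjoint_paths src tgt s t [::].
Proof. by split. Qed.

Lemma edp_cons p Q : is_path src tgt s t p -> edge_disjoint_paths src tgt s t Q ->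
  (forall q e, q \in Q -> e \in p -> e \notin q) ->
  edge_disjoint_paths src tgt s t (p :: Q).
Proof.
move=> pp [hQ dQ] hd; split.
  by move=> q; rewrite in_cons => /orP[/eqP->|]; [|apply: hQ].
case=> [|i] [|j] //= hi hj hij e.
- move=> ep; apply: hd ep; exact: mem_nth.
- move=> eq; apply/negP => ep; move: (hd _ _ (mem_nth [::] hi) ep); by rewrite eq.
- exact: dQ.
Qed.

Lemma edp_uncons p Q : edge_disjoint_paths src tgt s t (p :: Q) ->
  [/\ is_path src tgt s t p, edge_disjoint_paths src tgt s t Q &
      forall q e, q \in Q -> e \in p -> e \notin q].
Proof.
move=> [hQ dQ]; split.
- by apply: hQ; rewrite mem_head.
- split; first by move=> q qQ; apply: hQ; rewrite in_cons qQ orbT.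
  move=> i j hi hj hij; exact: (dQ i.+1 j.+1).
- move=> q e qQ ep.
  have := dQ 0 (index q Q).+1 erefl; rewrite /= ltnS index_mem => /(_ qQ erefl e ep).
  by rewrite nth_index.
Qed.

Lemma path_uniq p : is_path src tgt s t p -> uniq p.
Proof. by case/and3P => _ _ /= /andP[_ /map_uniq]. Qed.

Definition Uof (Q : seq (seq E)) : {set E} := [set e | has (fun q => e \in q) Q].

Lemma Uof_cons (p : seq E) Q : Uof (p :: Q) = [set x in p] :|: Uof Q.
Proof. by apply/setP => e; rewrite !inE. Qed.

Lemma disj_Uof (p : seq E) (Q : seq (seq E)) : (forall q e, q \in Q -> e \in p -> e \notin q) ->
  [disjoint [set x in p] & Uof Q].
Proof.
move=> hd; rewrite -setI_eq0; apply/eqP/setP => e; rewrite !inE.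
apply/negP => /andP[ep /hasP[q qQ eq]]; by move: (hd _ _ qQ ep); rewrite eq.
Qed.

Lemma balanced_walk (F : {set E}) p v : is_path src tgt s t p -> v != t ->
  outF [set x in p] v = inF [set x in p] v + (v == s).
Proof.
move=> pp vt; have up := path_uniq pp; rewrite out_pset // in_pset //.
case/and3P: pp => w /eqP lt _; have := walk_count v w; rewrite lt.
rewrite eq_sym (negbTE vt) eq_sym; lia.
Qed.

Lemma balanced_Uof Q : edge_disjoint_paths src tgt s t Q -> balanced (Uof Q) (size Q).
Proof.
elim: Q => [|p Q IH].
  move=> _ v _; rewrite /outF /inF !big_pred0 ?muln0 // => e; by rewrite inE.
case/edp_uncons => pp dQ hd v vt; have dj := disj_Uof hd.
rewrite Uof_cons outU // inU // (IH dQ v vt) (balanced_walk set0 pp vt) /=.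
case: (v == s); lia.
Qed.


Definition fr (F : {set E}) : rel V :=
  fun u w => [exists e, [&& e \in F, src e == u & tgt e == w]].

Lemma vpath_fr (F : {set E}) x vs : path (fr F) x vs ->
  exists p, [/\ walk_from src tgt x p, map tgt p = vs & {subset p <= F}].
Proof.
elim: vs x => [|v vs IH] x /=; first by exists [::].
case/andP => /existsP[e /and3P[eF /eqP se /eqP te]] /IH[p [w mp sp]].
exists (e :: p); split => /=.
- by rewrite se eqxx te.
- by rewrite te mp.
- by move=> f; rewrite in_cons => /orP[/eqP->|/sp].
Qed.

Lemma connect_closed (r : rel V) u w : connect r s u -> r u w -> connect r s w.
Proof. move=> cu ruw; apply: connect_trans cu _; exact: connect1. Qed.

Lemma extract (F : {set E}) n : balanced F n.+1 ->
  exists p, is_path src tgt s t p /\ {subset p <= F}.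
Proof.
move=> bal.
case: (boolP (connect (fr F) s t)) => [/connectP[vs pth lst] | nc].
  move: lst; case: (shortenP pth) => vs' pth' uq _ lst.
  case: (vpath_fr pth') => p [w mp sp]; exists p; split => //.
  by rewrite /is_path w mp -lst eqxx uq.
pose R := [set v | connect (fr F) s v].
have sR : s \in R by rewrite inE connect0.
have tR : t \notin R by rewrite inE.
have := cutflow sR tR bal.
have : \sum_(e in F) (src e \in R : nat) <= \sum_(e in F) (tgt e \in R : nat).
  apply: leq_sum => e eF; case sRe: (src e \in R) => //=.
  suff -> : tgt e \in R by [].
  rewrite inE; apply: (@connect_closed _ (src e)).
    by move: sRe; rewrite inE.
  by apply/existsP; exists e; rewrite eF !eqxx.
lia.
Qed.

Lemma extract_paths n : forall F, balanced F n -> exists Q,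
  [/\ size Q = n, edge_disjoint_paths src tgt s t Q &
      forall q e, q \in Q -> e \in q -> e \in F].
Proof.
elim: n => [|n IH] F bal.
  by exists [::]; split => //; exact: edp_nil.
case: (extract bal) => p [pp sp].
pose F' := F :\: [set x in p].
have dj : [disjoint [set x in p] & F'].
  rewrite -setI_eq0; apply/eqP/setP => e; rewrite !inE.
  by case: (e \in p); rewrite ?andbF.
have eF : F = [set x in p] :|: F'.
  apply/setP => e; rewrite !inE; case ep: (e \in p) => //=.
  by rewrite (sp _ ep).
have bal' : balanced F' n.
  move=> v vt; have := bal v vt; rewrite eF outU // inU //.
  rewrite (balanced_walk set0 pp vt); case: (v == s); lia.
case: (IH _ bal') => Q [sQ dQ hQ]; exists (p :: Q); split.
- by rewrite /= sQ.
- apply: edp_cons => // q e qQ ep; apply/negP => eq.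
  by move: (hQ _ _ qQ eq); rewrite !inE ep.
- move=> q e; rewrite in_cons => /orP[/eqP-> /sp //| qQ eq].
  by move: (hQ _ _ qQ eq); rewrite inE => /andP[].
Qed.


Definition rnext (F : {set E}) e := if e \in F then src e else tgt e.
Definition rstart (F : {set E}) e := if e \in F then tgt e else src e.
Definition res (F : {set E}) : rel V :=
  fun u w => [exists e, (rstart F e == u) && (rnext F e == w)].
Fixpoint rwalk (F : {set E}) x p := if p is e :: p' then
  (rstart F e == x) && rwalk F (rnext F e) p' else true.

Definition tog (F : {set E}) e := if e \in F then F :\ e else e |: F.
Definition preinv F x n := forall v, v != t ->
  outF F v + (x == v) = inF F v + (v == s) * n.

Lemma tog_step F e n : preinv F (rstart F e) n -> preinv (tog F e) (rnext F e) n.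
Proof.
rewrite /preinv /tog /rstart /rnext; case eF: (e \in F) => h v vt; have := h v vt.
- rewrite /outF /inF (big_setD1 e eF) [X in _ = X + _](big_setD1 e eF) /=; lia.
- rewrite /outF /inF (big_setU1 _ (negbT eF)) (big_setU1 (F := fun e => (tgt e == v) : nat) _ (negbT eF)) /=; lia.
Qed.

Lemma rwalk_ends (F : {set E}) y p f : rwalk F y p -> f \in p ->
  (src f \in y :: map (rnext F) p) && (tgt f \in y :: map (rnext F) p).
Proof.
elim: p y => [|e p IH] y //= /andP[/eqP st w]; rewrite in_cons => /orP[/eqP->|fp].
  move: st; rewrite /rstart /rnext; case: (e \in F) => <-;
  by rewrite !in_cons !eqxx ?orbT.
case/andP: (IH _ w fp) => h1 h2; by rewrite !in_cons in h1 h2 *; rewrite h1 h2 !orbT.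
Qed.

Lemma rwalk_eq (F F' : {set E}) x p : {in p, forall e, (e \in F) = (e \in F')} ->
  rwalk F x p = rwalk F' x p /\ map (rnext F) p = map (rnext F') p.
Proof.
elim: p x => [|e p IH] x //= h.
have he : (e \in F) = (e \in F') by apply: h; rewrite mem_head.
have [h1 h2] : rwalk F (rnext F e) p = rwalk F' (rnext F e) p /\
   map (rnext F) p = map (rnext F') p.
  by apply: IH => f fp; apply: h; rewrite in_cons fp orbT.
by rewrite h1 h2 /rstart /rnext he.
Qed.

Lemma augment n : forall p x (F : {set E}), rwalk F x p -> uniq (x :: map (rnext F) p) ->
  last x (map (rnext F) p) = t -> preinv F x n -> exists F', preinv F' t n.
Proof.
elim=> [|e p IH] x F /=.
  by move=> _ _ -> h; exists F.
case/andP => /eqP st w /andP[xn up] lst h.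
have ep : e \notin p.
  apply/negP => ep; case/andP: (rwalk_ends w ep) => h1 h2.
  move: st; rewrite /rstart; case: (e \in F) => st.
    by move: h2; rewrite st (negbTE xn).
  by move: h1; rewrite st (negbTE xn).
have [h1 h2] : rwalk F (rnext F e) p = rwalk (tog F e) (rnext F e) p /\
   map (rnext F) p = map (rnext (tog F e)) p.
  apply: rwalk_eq => f fp; have fe : f != e.
    by apply: contraNneq ep => <-.
  by rewrite /tog; case: (e \in F); rewrite !inE (negbTE fe).
apply: (IH (rnext F e) (tog F e)).
- by rewrite -h1.
- by rewrite -h2.
- by rewrite -h2.
- apply: tog_step; by rewrite st.
Qed.


Lemma vpath_res (F : {set E}) x vs : path (res F) x vs ->
  exists p, rwalk F x p /\ map (rnext F) p = vs.
Proof.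
elim: vs x => [|v vs IH] x /=; first by exists [::].
case/andP => /existsP[e /andP[/eqP se /eqP te]] /IH[p [w mp]].
by exists (e :: p); rewrite /= se eqxx te mp w.
Qed.

Lemma crossing (R : {set V}) x p : walk_from src tgt x p -> x \in R ->
  last x (map tgt p) \notin R -> has (fun e => (src e \in R) && (tgt e \notin R)) p.
Proof.
elim: p x => [|e p IH] x /=; first by move=> _ ->.
case/andP => /eqP se w xR lR; case tR: (tgt e \in R).
  by rewrite (IH _ w tR lR) orbT.
by rewrite se xR.
Qed.

Lemma mincut_le P X : max_disjoint_paths src tgt s t P ->
  is_min_cut src tgt s t X -> #|X| <= size P.
Proof.
move=> [dP mP] [cX mX].
pose F0 := Uof P; have bal := balanced_Uof dP.
case: (boolP (connect (res F0) s t)) => [/connectP[vs pth lst] | nc].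
  move: lst; case: (shortenP pth) => vs' pth' uq _ lst.
  case: (vpath_res pth') => p [w mp].
  have pre : preinv F0 s (size P).+1.
    move=> v vt; rewrite /F0 (bal v vt) [s == v]eq_sym; case: (v == s) => /=; lia.
  case: (augment (n := (size P).+1) w); rewrite ?mp // => F' pre'.
  have bal' : balanced F' (size P).+1.
    by move=> v vt; have := pre' v vt; rewrite eq_sym (negbTE vt) addn0.
  case: (extract_paths bal') => Q [sQ dQ _].
  by move: (mP _ dQ); rewrite sQ ltnn.
pose R := [set v | connect (res F0) s v].
have sR : s \in R by rewrite inE connect0.
have tR : t \notin R by rewrite inE.
have clo : forall u w, u \in R -> res F0 u w -> w \in R.
  move=> u w; rewrite !inE => su ruw; exact: connect_closed su ruw.
pose X' := [set e | (src e \in R) && (tgt e \notin R)].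
have cX' : is_cut src tgt s t X'.
  move=> p /and3P[w /eqP lt _].
  have := crossing w sR; rewrite lt => /(_ tR) /hasP[e ep he].
  by apply/hasP; exists e; rewrite // inE.
apply: leq_trans (mX _ cX') _.
have sub : forall e, e \in X' -> e \in F0.
  move=> e; rewrite inE => /andP[sRe tRe]; apply/negPn/negP => eF.
  move/negP: tRe; apply; apply: clo sRe _.
  by apply/existsP; exists e; rewrite /rstart /rnext (negbTE eF) !eqxx.
have noin : forall e, e \in F0 -> tgt e \in R -> src e \in R.
  move=> e eF tRe; apply: clo tRe _.
  by apply/existsP; exists e; rewrite /rstart /rnext eF !eqxx.
have := cutflow sR tR bal; rewrite sum_split.
have -> : \sum_(e in F0) (tgt e \in R : nat) =
          \sum_(e in F0) ((src e \in R) && (tgt e \in R) : nat).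
  apply: eq_bigr => e eF; case tRe: (tgt e \in R); last by rewrite andbF.
  by rewrite (noin e eF tRe).
have -> : \sum_(e in F0) ((src e \in R) && (tgt e \notin R) : nat) = #|X'|.
  rewrite -sum1_card (big_mkcond (fun e => e \in X')) /=.
  rewrite [RHS](bigID (mem F0)) /= [X in _ = _ + X]big1; last first.
    move=> e eF; case eX: (e \in X') => //; by rewrite (sub e eX) in eF.
  rewrite addn0; apply: eq_big => [e|e _]; rewrite ?inE //; by case: (_ && _).
rewrite /F0; lia.
Qed.


Lemma sum_cap Q (X : {set E}) : edge_disjoint_paths src tgt s t Q ->
  \sum_(q <- Q) #|X :&: [set x in q]| = #|X :&: Uof Q|.
Proof.
elim: Q => [|p Q IH].
  move=> _; rewrite big_nil; apply/esym/eqP; rewrite cards_eq0; apply/eqP/setP => e.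
  by rewrite !inE andbF.
case/edp_uncons => pp dQ hd; rewrite big_cons (IH dQ) Uof_cons setIUr cardsU.
have -> : (X :&: [set x in p]) :&: (X :&: Uof Q) = set0.
  apply/setP => e; rewrite !inE; apply/negP => /andP[/andP[_ ep] /andP[_ /hasP[q qQ eq]]].
  by move: (hd _ _ qQ ep); rewrite eq.
by rewrite cards0 subn0.
Qed.

Lemma sum_ge (Q : seq (seq E)) (f : seq E -> nat) : (forall q, q \in Q -> 0 < f q) ->
  size Q <= \sum_(q <- Q) f q.
Proof.
elim: Q => [|q Q IH] h; first by [].
rewrite big_cons /=; have h1 := h q (mem_head _ _).
have h2 : size Q <= \sum_(r <- Q) f r by apply: IH => r rQ; apply: h; rewrite in_cons rQ orbT.
lia.
Qed.

Lemma sum_gt (Q : seq (seq E)) (f : seq E -> nat) p : (forall q, q \in Q -> 0 < f q) ->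
  p \in Q -> 1 < f p -> size Q < \sum_(q <- Q) f q.
Proof.
elim: Q => [|q Q IH] //= h; rewrite big_cons in_cons => /orP[/eqP <- fp|pQ fp].
  have : size Q <= \sum_(r <- Q) f r by apply: sum_ge => r rQ; apply: h; rewrite in_cons rQ orbT.
  lia.
have h1 := h q (mem_head _ _).
have : size Q < \sum_(r <- Q) f r.
  by apply: IH pQ fp => r rQ; apply: h; rewrite in_cons rQ orbT.
lia.
Qed.

Lemma one_per_path P X : max_disjoint_paths src tgt s t P ->
  is_min_cut src tgt s t X -> forall p, p \in P ->
  forall x y, x \in p -> y \in p -> x \in X -> y \in X -> x = y.
Proof.
move=> mP mX p pP x y xp yp xX yX; apply/eqP/negPn/negP => nxy.
have le := mincut_le mP mX; case: mP => dP _; case: mX => cX _.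
have := sum_cap X dP.
have := @sum_gt P (fun q => #|X :&: [set x in q]|) p _ pP.
have h2 : 1 < #|X :&: [set x in p]|.
  have : #|[set x; y]| <= #|X :&: [set x in p]|.
    apply: subset_leq_card; apply/subsetP => z; rewrite !inE.
    by case/orP=> /eqP->; rewrite ?xX ?xp ?yX ?yp.
  by rewrite cards2 nxy.
move=> /(_ _ h2) h3 h4.
have : #|X :&: Uof P| <= #|X| by apply: subset_leq_card; apply: subsetIl.
suff h1 : forall q, q \in P -> 0 < #|X :&: [set x in q]|.
  move: (h3 h1); rewrite h4; lia.
move=> q qP; have := cX q ((proj1 dP) q qP) => /hasP[z zq zX].
apply/card_gt0P; exists z; by rewrite !inE zX zq.
Qed.

Lemma path_unique P p q e : edge_disjoint_paths src tgt s t P -> p \in P -> q \in P ->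
  e \in p -> e \in q -> p = q.
Proof.
move=> [_ dP] pP qP ep eq; apply/eqP/negPn/negP => npq.
have hi : index p P < size P by rewrite index_mem.
have hj : index q P < size P by rewrite index_mem.
have hij : index p P != index q P.
  by apply: contra npq => /eqP h; rewrite -(nth_index [::] pP) h nth_index.
by move: (dP _ _ hi hj hij e); rewrite !nth_index // ep eq => /(_ erefl).
Qed.


Lemma drop_mem (T : eqType) (l : seq T) x n : uniq l -> x \in l ->
  (x \in drop n l) = ~~ (index x l < n).
Proof.
move=> ul xl; rewrite -in_take //.
have : x \in take n l ++ drop n l by rewrite cat_take_drop.
have : uniq (take n l ++ drop n l) by rewrite cat_take_drop.
rewrite cat_uniq mem_cat => /and3P[_ nh _].
case xd: (x \in drop n l); case xt: (x \in take n l) => //= _.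
by move/hasP: nh; case; exists x.
Qed.

Section Fixed.
Variables (P : seq (seq E)) (p0 : seq E) (e : E).
Hypotheses (mP : max_disjoint_paths src tgt s t P) (p0P : p0 \in P) (ep0 : e \in p0).

Let pp0 : is_path src tgt s t p0.
Proof. by case: mP => [[h _] _]; apply: h. Qed.
Let up0 : uniq p0 := path_uniq pp0.

Definition aX (X : {set E}) := find (fun x => x \in X) p0.

Lemma aX_spec X : is_min_cut src tgt s t X ->
  let x := nth e p0 (aX X) in
  [/\ x \in p0, x \in X, forall y, y \in p0 -> y \in X -> y = x & index x p0 = aX X].
Proof.
move=> mX x; have hX : has (fun x => x \in X) p0 by case: mX => c _; apply: c.
have lt : aX X < size p0 by rewrite /aX -has_find.
have xp : x \in p0 by apply: mem_nth.
have xX : x \in X by apply: (nth_find e hX).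
split => //.
- move=> y yp yX; exact: (one_per_path mP mX p0P yp xp yX xX).
- by rewrite /x index_uniq.
Qed.

Lemma memX X : is_min_cut src tgt s t X -> (e \in X) = (aX X == index e p0).
Proof.
move=> mX; case: (aX_spec mX) => xp xX uq ix.
apply/idP/eqP => [eX | h].
  by rewrite -ix -(uq e ep0 eX).
by have := xX; rewrite h nth_index.
Qed.

Lemma notin_drop X n : is_min_cut src tgt s t X ->
  all (fun f => f \notin X) (drop n p0) = (aX X < n).
Proof.
move=> mX; case: (aX_spec mX) => xp xX uq ix.
apply/allP/idP => [h | h f fd].
  have := h (nth e p0 (aX X)); rewrite drop_mem // ix xX.
  by case: (aX X < n) => // /(_ erefl).
apply/negP => fX; have fp : f \in p0 by apply: mem_drop fd.
by move: fd; rewrite (uq f fp fX) drop_mem // ix h.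
Qed.

Lemma notin_take X n : is_min_cut src tgt s t X ->
  all (fun f => f \notin X) (take n p0) = (n <= aX X).
Proof.
move=> mX; case: (aX_spec mX) => xp xX uq ix.
apply/allP/idP => [h | h f fd].
  have := h (nth e p0 (aX X)); rewrite in_take // ix xX.
  by case: (leqP n (aX X)) => // _ /(_ erefl).
apply/negP => fX; have fp : f \in p0 by apply: mem_take fd.
by move: fd; rewrite (uq f fp fX) in_take // ix ltnNge h.
Qed.

Lemma allU (X Y : {set E}) l : all (fun f => f \notin X :|: Y) l =
  all (fun f => f \notin X) l && all (fun f => f \notin Y) l.
Proof. rewrite -all_predI; apply: eq_all => f; by rewrite !inE negb_or. Qed.

Lemma Smax_iff X Y : is_min_cut src tgt s t X -> is_min_cut src tgt s t Y ->
  (e \in Smax P (X :|: Y)) = (maxn (aX X) (aX Y) == index e p0).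
Proof.
move=> mX mY.
have -> : (e \in Smax P (X :|: Y)) =
   (e \in X :|: Y) && all (fun f => f \notin X :|: Y) (drop (index e p0).+1 p0).
  rewrite inE; apply/hasP/andP => [[p pP /and3P[ep eZ al]] | [eZ al]].
    by rewrite -(path_unique (proj1 mP) pP p0P ep ep0).
  by exists p0 => //; rewrite ep0 eZ al.
rewrite allU (notin_drop _ mX) (notin_drop _ mY) inE (memX mX) (memX mY).
lia.
Qed.

Lemma Smin_iff X Y : is_min_cut src tgt s t X -> is_min_cut src tgt s t Y ->
  (e \in Smin P (X :|: Y)) = (minn (aX X) (aX Y) == index e p0).
Proof.
move=> mX mY.
have -> : (e \in Smin P (X :|: Y)) =
   (e \in X :|: Y) && all (fun f => f \notin X :|: Y) (take (index e p0) p0).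
  rewrite inE; apply/hasP/andP => [[p pP /and3P[ep eZ al]] | [eZ al]].
    by rewrite -(path_unique (proj1 mP) pP p0P ep ep0).
  by exists p0 => //; rewrite ep0 eZ al.
rewrite allU (notin_take _ mX) (notin_take _ mY) inE (memX mX) (memX mY).
lia.
Qed.

Lemma aX_mono X Y : cut_le src tgt s t X Y -> aX X <= aX Y.
Proof. by move=> h; apply: h. Qed.

End Fixed.

End Menger.

Lemma oneD_max k (a b : 'I_k -> nat) q :
  (forall i j : 'I_k, i < j -> a i <= a j) -> (forall i j : 'I_k, i < j -> b i <= b j) ->
  #|[set i | maxn (a i) (b i) == q]| <= maxn #|[set i | a i == q]| #|[set i | b i == q]|.
Proof.
move=> ma mb.
case: (boolP ([set i | maxn (a i) (b i) == q] \subset [set i | a i == q])) => hA.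
  by apply: leq_trans (subset_leq_card hA) (leq_maxl _ _).
case: (boolP ([set i | maxn (a i) (b i) == q] \subset [set i | b i == q])) => hB.
  by apply: leq_trans (subset_leq_card hB) (leq_maxr _ _).
case/subsetPn: hA => i; rewrite !inE => hi1 hi2.
case/subsetPn: hB => j; rewrite !inE => hj1 hj2.
case: (ltngtP i j) => hij.
- have := mb _ _ hij; lia.
- have := ma _ _ hij; lia.
- have eij : i = j by apply: val_inj.
  subst j; lia.
Qed.

Lemma oneD_min k (a b : 'I_k -> nat) q :
  (forall i j : 'I_k, i < j -> a i <= a j) -> (forall i j : 'I_k, i < j -> b i <= b j) ->
  #|[set i | minn (a i) (b i) == q]| <= maxn #|[set i | a i == q]| #|[set i | b i == q]|.
Proof.
move=> ma mb.
case: (boolP ([set i | minn (a i) (b i) == q] \subset [set i | a i == q])) => hA.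
  by apply: leq_trans (subset_leq_card hA) (leq_maxl _ _).
case: (boolP ([set i | minn (a i) (b i) == q] \subset [set i | b i == q])) => hB.
  by apply: leq_trans (subset_leq_card hB) (leq_maxr _ _).
case/subsetPn: hA => i; rewrite !inE => hi1 hi2.
case/subsetPn: hB => j; rewrite !inE => hj1 hj2.
case: (ltngtP i j) => hij.
- have := ma _ _ hij; lia.
- have := mb _ _ hij; lia.
- have eij : i = j by apply: val_inj.
  subst j; lia.
Qed.

Theorem lemma4 (V E : finType) (src tgt : E -> V) (s t : V) (k : nat)
  (P : seq (seq E)) :
  0 < k ->
  max_disjoint_paths src tgt s t P ->
  forall C1 C2 : 'I_k -> {set E},
  in_Ulr src tgt s t C1 -> in_Ulr src tgt s t C2 ->
  forall e, e \in Eof C1 :|: Eof C2 ->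
  maxn (mu e (Ljoin P C1 C2)) (mu e (Lmeet P C1 C2))
    <= maxn (mu e C1) (mu e C2).
Proof.
move=> _ mP C1 C2 [m1 o1] [m2 o2] e _.
case: (boolP (has (fun p => e \in p) P)) => [/hasP[p0 p0P ep0] | nh]; last first.
  have h0 : forall Z, e \notin Smax P Z.
    move=> Z; rewrite inE; apply: contra nh => /hasP[p pP /and3P[ep _ _]].
    by apply/hasP; exists p.
  have h1 : forall Z, e \notin Smin P Z.
    move=> Z; rewrite inE; apply: contra nh => /hasP[p pP /and3P[ep _ _]].
    by apply/hasP; exists p.
  have -> : mu e (Ljoin P C1 C2) = 0.
    apply/eqP; rewrite cards_eq0; apply/eqP/setP => i.
    by rewrite in_set0 in_set /Ljoin (negbTE (h0 _)).
  have -> : mu e (Lmeet P C1 C2) = 0.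
    apply/eqP; rewrite cards_eq0; apply/eqP/setP => i.
    by rewrite in_set0 in_set /Lmeet (negbTE (h1 _)).
  by [].
pose a i := aX p0 (C1 i); pose b i := aX p0 (C2 i).
have ma : forall i j : 'I_k, i < j -> a i <= a j.
  by move=> i j hij; apply: (aX_mono mP p0P); apply: o1.
have mb : forall i j : 'I_k, i < j -> b i <= b j.
  by move=> i j hij; apply: (aX_mono mP p0P); apply: o2.
have E1 : mu e C1 = #|[set i | a i == index e p0]|.
  by apply: eq_card => i; rewrite [LHS]inE [RHS]inE (memX mP p0P ep0 (m1 i)).
have E2 : mu e C2 = #|[set i | b i == index e p0]|.
  by apply: eq_card => i; rewrite [LHS]inE [RHS]inE (memX mP p0P ep0 (m2 i)).
have E3 : mu e (Ljoin P C1 C2) = #|[set i | maxn (a i) (b i) == index e p0]|.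
  by apply: eq_card => i; rewrite [LHS]inE [RHS]inE /Ljoin (Smax_iff mP p0P ep0 (m1 i) (m2 i)).
have E4 : mu e (Lmeet P C1 C2) = #|[set i | minn (a i) (b i) == index e p0]|.
  by apply: eq_card => i; rewrite [LHS]inE [RHS]inE /Lmeet (Smin_iff mP p0P ep0 (m1 i) (m2 i)).
rewrite E1 E2 E3 E4 geq_max oneD_max ?oneD_min //.
Qed.
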